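(* Let $\phi$ be a uniformly convex N-function. For every interior face $\gamma\in\mathcal F(\Omega)$ and every $v_h\in V_h$ at least one of the following two equivalences holds: \[ |[\![\nabla_h v_h]\!]_\gamma|\eqsim|[\![\gamma_\tau\nabla_h v_h]\!]_\gamma|\qquad\text{or}\qquad |[\![A(\nabla_h v_h)]\!]_\gamma|\eqsim|[\![A(\nabla_h v_h)\cdot\nu]\!]_\gamma|. \]
   Context: Let $d\in\{2,3\}$, let $\Omega\subset\mathbb R^d$ be a bounded polyhedral Lipschitz domain, and let $\mathcal T$ be a regular (conforming) triangulation of $\Omega$ into $d$-simplices with faces $\mathcal F$, interior faces $\mathcal F(\Omega)=\{\gamma\in\mathcal F:\gamma\not\subset\partial\Omega\}$ and boundary faces $\mathcal F(\partial\Omega)=\mathcal F\setminus\mathcal F(\Omega)$. A function $\varphi:[0,\infty)\to[0,\infty)$ is an N-function if it is continuous and convex and $\varphi(t)=\int_0^t\varphi'(s)\,ds$ for a right-continuous non-decreasing $\varphi'$ with $\varphi'(0)=0$, $\varphi'(t)>0$ for $t>0$, $\lim_{t\to\infty}\varphi'(t)=\infty$; it is uniformly convex if there are $0<c_{uc}\le C_{uc}<\infty$ with $c_{uc}\frac{\varphi'(s)-\varphi'(t)}{s-t}\le\frac{\varphi'(s)}{s}\le C_{uc}\frac{\varphi'(s)-\varphi'(t)}{s-t}$ for all $s>0$, $t\in[0,s)$. For $Q\in\mathbb R^d$, $A(Q)=\frac{\phi'(|Q|)}{|Q|}Q$ if $Q\ne0$ and $A(0)=0$. $V_h=\{v_h$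 piecewise affine on $\mathcal T$: $v_h$ is continuous at the barycenter of every $\gamma\in\mathcal F(\Omega)$ and vanishes at the barycenter of every $\gamma\in\mathcal F(\partial\Omega)\}$ is the Crouzeix--Raviart space and $\nabla_h$ the elementwise gradient. For $\gamma\in\mathcal F(\Omega)$ fix the two simplices $T_+,T_-\in\mathcal T$ with $\gamma=T_+\cap T_-$ and let $\nu$ be the unit normal of $\gamma$ pointing from $T_+$ to $T_-$; for a piecewise constant (scalar or vector-valued) $w$ the jump is $[\![w]\!]_\gamma=w|_{T_+}-w|_{T_-}$. The tangential trace is $\gamma_\tau Q=Q\cdot(-\nu_2,\nu_1)^\top$ for $d=2$ and $\gamma_\tau Q=Q\times\nu$ for $d=3$. $a\eqsim b$ means $c\,b\le a\le C\,b$ with $0<c\le C<\infty$ depending only on $c_{uc},C_{uc}$, $d$ and the shape regularity of $\mathcal T$. *)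

(* Defs.v *)
From HB Require Import structures.
From mathcomp Require Import all_boot all_order all_algebra.
From mathcomp Require Import all_classical all_reals all_analysis.
Set Implicit Arguments. Unset Strict Implicit. Unset Printing Implicit Defensive.
Import Order.TTheory GRing.Theory Num.Theory.
Local Open Scope classical_set_scope.
Local Open Scope ring_scope.

Section Defs.
Variable R : realType.

Definition NFunction (phi phi' : R -> R) : Prop :=
  [/\ ((forall t, 0 <= t -> 0 <= phi t) /\
      (forall t, 0 <= t -> forall e, 0 < e -> exists2 del, 0 < del &
         forall s, 0 <= s -> `|s - t| < del -> `|phi s - phi t| < e) /\
      (forall x y l, 0 <= x -> 0 <= y -> 0 <= l <= 1 ->
         phi (l * x + (1 - l) * y) <= l * phi x + (1 - l) * phi y)),
      (forall t, 0 <= t ->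
         (phi t)%:E = (\int[lebesgue_measure]_(s in `[0%R, t]) (phi' s)%:E)%E),
      (forall t, 0 <= t -> forall e, 0 < e -> exists2 del, 0 < del &
         forall s, t <= s -> s < t + del -> `|phi' s - phi' t| < e) &
      [/\ (forall s t, 0 <= s -> s <= t -> phi' s <= phi' t),
          phi' 0 = 0,
          (forall t, 0 < t -> 0 < phi' t) &
          (forall M, exists T, forall t, T <= t -> M <= phi' t)]].

Definition unif_convex (cuc Cuc : R) (phi' : R -> R) : Prop :=
  forall s t, 0 < s -> 0 <= t -> t < s ->
    cuc * ((phi' s - phi' t) / (s - t)) <= phi' s / s /\
    phi' s / s <= Cuc * ((phi' s - phi' t) / (s - t)).

Definition dot (d : nat) (u v : 'rV[R]_d) : R := \sum_(i < d) u 0 i * v 0 i.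
Definition vnorm (d : nat) (u : 'rV[R]_d) : R := Num.sqrt (dot u u).
(* k-th coordinate (0-based); 0 if k >= d *)
Definition coord (d : nat) (u : 'rV[R]_d) (k : nat) : R :=
  \sum_(i < d | nat_of_ord i == k) u 0 i.

Definition Aop (phi' : R -> R) (d : nat) (Q : 'rV[R]_d) : 'rV[R]_d :=
  if Q == 0 then 0 else (phi' (vnorm Q) / vnorm Q) *: Q.

(* tangential traces: d = 2 : Q . (-nu_2, nu_1);  d = 3 : Q x nu *)
Definition gtau2 (d : nat) (Q nu : 'rV[R]_d) : R :=
  coord Q 0 * (- coord nu 1) + coord Q 1 * coord nu 0.
Definition gtau3 (d : nat) (Q nu : 'rV[R]_d) : 'rV[R]_3 :=
  \row_(k < 3)
    (if nat_of_ord k == 0%N then coord Q 1 * coord nu 2 - coord Q 2 * coord nu 1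
     else if nat_of_ord k == 1%N then coord Q 2 * coord nu 0 - coord Q 0 * coord nu 2
     else coord Q 0 * coord nu 1 - coord Q 1 * coord nu 0).
(* | [[ gamma_tau grad_h v_h ]] | for the piecewise constant gradient with
   value a on T_+ and b on T_- *)
Definition tjump_norm (d : nat) (a b nu : 'rV[R]_d) : R :=
  if d == 2%N then `|gtau2 a nu - gtau2 b nu|
  else vnorm (gtau3 a nu - gtau3 b nu).

(* A d-simplex with the vertices F 0, ..., F (d-1) (vertices of gamma) and
   the apex p. *)
Definition simplex_verts (d : nat) (F : 'I_d -> 'rV[R]_d) (p : 'rV[R]_d)
  (i : 'I_d.+1) : 'rV[R]_d :=
  if unlift ord0 i is Some j then F j else p.
Definition edge_det (d : nat) (F : 'I_d -> 'rV[R]_d) (p : 'rV[R]_d) : R :=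
  \det (\matrix_(i < d, j < d) (F i - p) 0 j).
Definition sdiam (d : nat) (F : 'I_d -> 'rV[R]_d) (p : 'rV[R]_d) : R :=
  \big[Num.max/0]_(i < d.+1) \big[Num.max/0]_(j < d.+1)
     vnorm (simplex_verts F p i - simplex_verts F p j).
(* shape regularity with parameter sigma: nondegenerate and
   diam(T)^d <= sigma * d! |T|  *)
Definition shape_reg (sigma : R) (d : nat) (F : 'I_d -> 'rV[R]_d)
  (p : 'rV[R]_d) : Prop :=
  edge_det F p != 0 /\ sdiam F p ^+ d <= sigma * `|edge_det F p|.

(* nu is the unit normal of gamma = conv(F) pointing from T_+ (apex pp) to
   T_- (apex pm); pp and pm lie strictly on opposite sides of gamma. *)
Definition face_normal (d : nat) (F : 'I_d -> 'rV[R]_d) (pp pm nu : 'rV[R]_d)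
  : Prop :=
  [/\ vnorm nu = 1,
      (forall i j, dot (F i - F j) nu = 0),
      (forall i, dot (pm - F i) nu > 0) &
      (forall i, dot (pp - F i) nu < 0)].

Definition bary (d : nat) (F : 'I_d -> 'rV[R]_d) : 'rV[R]_d :=
  (d%:R)^-1 *: \sum_(i < d) F i.

Definition eqsim (c C x y : R) : Prop := c * y <= x /\ x <= C * y.

End Defs.

(* Main.v *)
Require Import Defs.
From HB Require Import structures.
From mathcomp Require Import all_boot all_order all_algebra.
From mathcomp Require Import all_classical all_reals all_analysis.
From mathcomp Require Import ring lra.
Import Order.TTheory GRing.Theory Num.Theory.
Set Implicit Arguments. Unset Strict Implicit. Unset Printing Implicit Defensive.
Local Open Scope ring_scope.

Lemma dotC (R : realType) d (u v : 'rV[R]_d) : dot u v = dot v u.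
Proof. by rewrite /dot; apply: eq_bigr => i _; rewrite mulrC. Qed.

Lemma dotDl (R : realType) d (u v w : 'rV[R]_d) : dot (u + v) w = dot u w + dot v w.
Proof. by rewrite /dot -big_split; apply: eq_bigr => i _; rewrite !mxE mulrDl. Qed.

Lemma dotNl (R : realType) d (u w : 'rV[R]_d) : dot (- u) w = - dot u w.
Proof. by rewrite /dot -sumrN; apply: eq_bigr => i _; rewrite !mxE mulNr. Qed.

Lemma dotBl (R : realType) d (u v w : 'rV[R]_d) : dot (u - v) w = dot u w - dot v w.
Proof. by rewrite dotDl dotNl. Qed.

Lemma dotBr (R : realType) d (u v w : 'rV[R]_d) : dot w (u - v) = dot w u - dot w v.
Proof. by rewrite dotC dotBl !(dotC w). Qed.

Lemma dotZl (R : realType) d (k : R) (u w : 'rV[R]_d) : dot (k *: u) w = k * dot u w.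
Proof. by rewrite /dot mulr_sumr; apply: eq_bigr => i _; rewrite !mxE mulrA. Qed.

Lemma dotZr (R : realType) d (k : R) (u w : 'rV[R]_d) : dot w (k *: u) = k * dot w u.
Proof. by rewrite dotC dotZl dotC. Qed.

Lemma dot_ge0 (R : realType) d (u : 'rV[R]_d) : 0 <= dot u u.
Proof. by rewrite /dot; apply: sumr_ge0 => i _; rewrite -expr2 sqr_ge0. Qed.

Lemma dot_eq0 (R : realType) d (u : 'rV[R]_d) : dot u u = 0 -> u = 0.
Proof.
move=> /eqP; rewrite /dot psumr_eq0; last by move=> i _; rewrite -expr2 sqr_ge0.
move=> /allP H; apply/rowP => i; rewrite mxE.
have := H i (mem_index_enum i); rewrite implyTb -expr2 sqrf_eq0.
by move/eqP.
Qed.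

Lemma vnorm_ge0 (R : realType) d (u : 'rV[R]_d) : 0 <= vnorm u.
Proof. exact: sqrtr_ge0. Qed.

Lemma vnorm_sq (R : realType) d (u : 'rV[R]_d) : vnorm u ^+ 2 = dot u u.
Proof. by rewrite /vnorm sqr_sqrtr // dot_ge0. Qed.

Lemma vnorm_eq0 (R : realType) d (u : 'rV[R]_d) : vnorm u = 0 -> u = 0.
Proof. by move=> h; apply: dot_eq0; rewrite -vnorm_sq h expr0n. Qed.

Lemma CS (R : realType) d (u v : 'rV[R]_d) : `|dot u v| <= vnorm u * vnorm v.
Proof.
have key : forall w : 'rV[R]_d, dot u w <= vnorm u * vnorm w.
  move=> w.
  have hs := vnorm_ge0 u; have ht := vnorm_ge0 w.
  have [s0|] := eqVneq (vnorm u) 0.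
    by rewrite (vnorm_eq0 s0) /dot big1 ?mulr_ge0 ?vnorm_ge0 // => i _; rewrite mxE mul0r.
  have [t0|] := eqVneq (vnorm w) 0.
    by rewrite (vnorm_eq0 t0) /dot big1 ?mulr_ge0 ?vnorm_ge0 // => i _; rewrite mxE mulr0.
  move=> tn0 sn0.
  have hst : 0 < vnorm u * vnorm w by rewrite mulr_gt0 // lt_neqAle eq_sym ?sn0 ?tn0.
  have := dot_ge0 (vnorm w *: u - vnorm u *: w).
  rewrite !dotBl !dotBr !dotZl !dotZr -!vnorm_sq (dotC w u).
  move=> h.
  have : 0 <= 2 * (vnorm u * vnorm w) * (vnorm u * vnorm w - dot u w) by lra.
  by rewrite pmulr_rge0 ?subr_ge0 // mulr_gt0.
rewrite ler_norml key andbT.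
have := key (- v); rewrite /dot.
have -> : vnorm (- v) = vnorm v.
  by rewrite /vnorm /dot; congr Num.sqrt; apply: eq_bigr => i _; rewrite mxE mulrNN.
rewrite -lerN2 => h; apply: le_trans h _.
by rewrite -sumrN; apply: ler_sum => i _; rewrite mxE mulrN opprK.
Qed.
Lemma core (R : realType) (s t fs ft p cuc Cuc k1 k2 : R) :
  0 <= t -> t <= s -> -(s*t) <= p -> p <= s*t -> 0 <= fs -> 0 <= ft * t ->
  ft * t <= fs * s ->
  (s - t) * fs <= Cuc * (fs * s - ft * t) ->
  cuc * (fs * s - ft * t) <= (s - t) * fs ->
  0 < cuc -> 0 < Cuc -> 0 < k1 -> k1 * Cuc <= 1 -> 2 * k1 <= 1 ->
  1 <= k2 * cuc -> 2 <= k2 ->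
  fs * k1 * (s^+2 + t^+2 - 2 * p) <= fs * s^+2 + ft * t^+2 - (fs + ft) * p /\
  fs^+2 * s^+2 + ft^+2 * t^+2 - 2 * fs * ft * p <= fs^+2 * k2^+2 * (s^+2 + t^+2 - 2 * p).
Proof.
move=> t0 ts pl pu fs0 ftt0 ftts hu1 hu2 cu0 Cu0 k10 k1C k12 k2c k22.
have [t00|tpos] := eqVneq t 0.
  subst t; rewrite mulr0 in pl pu.
  have p0 : p = 0 by apply/eqP; rewrite eq_le; apply/andP; split; lra.
  subst p.
  have s0 : 0 <= s by lra.
  have ss : 0 <= s^+2 by rewrite sqr_ge0.
  have k11 : k1 <= 1 by lra.
  split.
    have -> : fs * s ^+ 2 + ft * 0 ^+ 2 - (fs + ft) * 0 = fs * s^+2 by ring.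
    have -> : fs * k1 * (s ^+ 2 + 0 ^+ 2 - 2 * 0) = k1 * (fs * s^+2) by ring.
    by rewrite ler_piMl // mulr_ge0.
  have k21 : 1 <= k2 ^+ 2 by rewrite expr2; nra.
  have -> : fs ^+ 2 * s ^+ 2 + ft ^+ 2 * 0 ^+ 2 - 2 * fs * ft * 0 = fs^+2 * s^+2 by ring.
  have -> : fs ^+ 2 * k2 ^+ 2 * (s ^+ 2 + 0 ^+ 2 - 2 * 0) = k2^+2 * (fs^+2 * s^+2) by ring.
  by rewrite ler_peMl // mulr_ge0 // sqr_ge0.
have tp : 0 < t by rewrite lt_neqAle eq_sym tpos.
have sp : 0 < s by lra.
have stp : 0 < s * t by rewrite mulr_gt0.
have h2st : 0 < 2 * s * t by rewrite !mulr_gt0.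
set x1 := fs * s - ft * t; set y1 := s - t; set x2 := fs * s + ft * t; set y2 := s + t.
have x10 : 0 <= x1 by rewrite /x1; lra.
have y10 : 0 <= y1 by rewrite /y1; lra.
have h1 : fs * k1 * y1 <= x1.
  have : k1 * ((s - t) * fs) <= k1 * (Cuc * x1) by rewrite ler_wpM2l // ltW.
  have : k1 * Cuc * x1 <= x1 by rewrite ler_piMl // mulr_ge0 // ltW.
  rewrite /y1; nra.
have h2 : fs * k1 * y2 <= x2.
  have : k1 * y2 <= s by rewrite /y2; nra.
  move=> h; have : fs * (k1 * y2) <= fs * s by rewrite ler_wpM2l.
  rewrite /x2; nra.
have h3 : x1 <= fs * k2 * y1.
  have : x1 <= k2 * cuc * x1 by rewrite ler_peMl.
  have : k2 * (cuc * x1) <= k2 * ((s - t) * fs) by rewrite ler_wpM2l //; lra.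
  rewrite /y1; nra.
have h4 : x2 <= fs * k2 * y2.
  have : 2 * s <= k2 * y2 by rewrite /y2; nra.
  move=> h; have : fs * (2 * s) <= fs * (k2 * y2) by rewrite ler_wpM2l.
  rewrite /x2; nra.
have al0 : 0 <= (s * t + p) by lra.
have be0 : 0 <= (s * t - p) by lra.
split.
  have id1 : 2 * s * t * ((fs * s^+2 + ft * t^+2 - (fs + ft) * p) - fs * k1 * (s^+2 + t^+2 - 2 * p))
     = (s * t + p) * ((x1 - fs * k1 * y1) * y1) + (s * t - p) * ((x2 - fs * k1 * y2) * y2).
    rewrite /x1 /y1 /x2 /y2; ring.
  have : 0 <= 2 * s * t * ((fs * s^+2 + ft * t^+2 - (fs + ft) * p) - fs * k1 * (s^+2 + t^+2 - 2 * p)).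
    rewrite id1; apply: addr_ge0; apply: mulr_ge0 => //; apply: mulr_ge0; rewrite ?subr_ge0 // /y2; lra.
  by rewrite pmulr_rge0 // subr_ge0.
have id2 : 2 * s * t * (fs^+2 * k2^+2 * (s^+2 + t^+2 - 2 * p) - (fs^+2 * s^+2 + ft^+2 * t^+2 - 2 * fs * ft * p))
   = (s * t + p) * ((fs * k2 * y1)^+2 - x1^+2) + (s * t - p) * ((fs * k2 * y2)^+2 - x2^+2).
  rewrite /x1 /y1 /x2 /y2; ring.
have : 0 <= 2 * s * t * (fs^+2 * k2^+2 * (s^+2 + t^+2 - 2 * p) - (fs^+2 * s^+2 + ft^+2 * t^+2 - 2 * fs * ft * p)).
  have y20 : 0 <= y2 by rewrite /y2; lra.
  have x20 : 0 <= x2 by rewrite /x2; lra.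
  rewrite id2; apply: addr_ge0; apply: mulr_ge0 => //; rewrite subr_ge0 ler_sqr ?nnegrE //.
  - by apply: le_trans h3.
  - by apply: le_trans h4.
by rewrite pmulr_rge0 // subr_ge0.
Qed.

Definition fA (R : realType) (phi' : R -> R) d (x : 'rV[R]_d) : R :=
  if x == 0 then 0 else phi' (vnorm x) / vnorm x.

Lemma AopE (R : realType) (phi' : R -> R) d (x : 'rV[R]_d) : Aop phi' x = fA phi' x *: x.
Proof. by rewrite /Aop /fA; case: eqP => [->|//]; rewrite scale0r. Qed.

Lemma fAmul (R : realType) (phi' : R -> R) d (x : 'rV[R]_d) :
  phi' 0 = 0 -> fA phi' x * vnorm x = phi' (vnorm x).
Proof.
move=> p0; rewrite /fA; case: eqP => [->|/eqP xn0].
  by rewrite mul0r /vnorm /dot big1 ?sqrtr0 ?p0 // => i _; rewrite mxE mul0r.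
rewrite divfK //; apply/eqP => /vnorm_eq0 /eqP; exact/negP.
Qed.

Lemma fA_ge0 (R : realType) (phi' : R -> R) d (x : 'rV[R]_d) :
  (forall t, 0 <= t -> 0 <= phi' t) -> 0 <= fA phi' x.
Proof.
move=> h; rewrite /fA; case: eqP => // _.
by rewrite divr_ge0 ?h ?vnorm_ge0.
Qed.

Definition kap (R : realType) (cuc Cuc : R) := (Cuc + 2)^-1 / (cuc^-1 + 2).

Lemma mono_le (R : realType) (phi' : R -> R) (cuc Cuc : R) d (a b : 'rV[R]_d) :
  (forall s t, 0 <= s -> s <= t -> phi' s <= phi' t) -> phi' 0 = 0 ->
  unif_convex cuc Cuc phi' -> 0 < cuc -> 0 < Cuc ->
  vnorm b <= vnorm a ->
  kap cuc Cuc * vnorm (Aop phi' a - Aop phi' b) * vnorm (a - b)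
    <= dot (Aop phi' a - Aop phi' b) (a - b).
Proof.
move=> hmon h0 huc cu0 Cu0 hba.
have phi0 : forall t, 0 <= t -> 0 <= phi' t by move=> t t0; rewrite -h0 hmon.
rewrite !AopE.
set s := vnorm a; set t := vnorm b; set fs := fA phi' a; set ft := fA phi' b.
set p := dot a b.
have hs : fs * s = phi' s by exact: fAmul.
have ht : ft * t = phi' t by exact: fAmul.
have t0 : 0 <= t := vnorm_ge0 b.
have fs0 : 0 <= fs := fA_ge0 a phi0.
have [pl pu] : -(s * t) <= p /\ p <= s * t.
  by have := CS a b; rewrite ler_norml => /andP.
have DE : dot (fs *: a - ft *: b) (a - b) = fs * s^+2 + ft * t^+2 - (fs + ft) * p.
  rewrite !dotBl !dotBr !dotZl -!vnorm_sq -/s -/t (dotC b a) -/p; ring.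
have D2 : vnorm (fs *: a - ft *: b) ^+ 2 = fs^+2 * s^+2 + ft^+2 * t^+2 - 2 * fs * ft * p.
  rewrite vnorm_sq !dotBl !dotBr !dotZl !dotZr -!vnorm_sq -/s -/t (dotC b a) -/p; ring.
have E2 : vnorm (a - b) ^+ 2 = s^+2 + t^+2 - 2 * p.
  rewrite vnorm_sq !dotBl !dotBr -!vnorm_sq -/s -/t (dotC b a) -/p; ring.
have hu : (s - t) * fs <= Cuc * (fs * s - ft * t) /\ cuc * (fs * s - ft * t) <= (s - t) * fs.
  rewrite hs ht.
  have [ts|] := eqVneq t s.
    by rewrite ts !subrr !mulr0 mul0r.
  move=> tns.
  have tls : t < s by rewrite lt_neqAle tns hba.
  have sp : 0 < s by apply: le_lt_trans tls.
  have stp : 0 < s - t by rewrite subr_gt0.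
  have fsE : fs = phi' s / s by rewrite -hs mulfK // gt_eqF.
  have [u1 u2] := huc s t sp t0 tls.
  rewrite -fsE in u1 u2.
  split.
    by move: u2; rewrite mulrA ler_pdivlMr // mulrC.
  by move: u1; rewrite mulrA ler_pdivrMr // [fs * _]mulrC.
have k10 : 0 < (Cuc + 2)^-1 by rewrite invr_gt0; lra.
have k2p : 0 < cuc^-1 + 2 by have := invr_gt0 cuc; rewrite cu0 => ?; lra.
have q1 : 0 <= ft * t by rewrite ht; exact: phi0.
have q2 : ft * t <= fs * s by rewrite hs ht; exact: hmon.
have C2 : 0 < Cuc + 2 by lra.
have q3 : (Cuc + 2)^-1 * Cuc <= 1 by rewrite mulrC ler_pdivrMr // mul1r; lra.
have q4 : 2 * (Cuc + 2)^-1 <= 1 by rewrite ler_pdivrMr // mul1r; lra.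
have q5 : 1 <= (cuc^-1 + 2) * cuc.
  rewrite mulrDl mulVf ?gt_eqF //; nra.
have q6 : 2 <= cuc^-1 + 2.
  have := invr_gt0 cuc; rewrite cu0 => ?; lra.
have [c1 c2] := core t0 hba pl pu fs0 q1 q2 hu.1 hu.2 cu0 Cu0 k10 q3 q4 q5 q6.
rewrite -E2 -D2 -DE in c1 c2.
have hD : vnorm (fs *: a - ft *: b) <= fs * (cuc^-1 + 2) * vnorm (a - b).
  have k2n : 0 <= fs * (cuc^-1 + 2) * vnorm (a - b) by rewrite !mulr_ge0 ?vnorm_ge0 // ltW.
  rewrite -(ler_sqr (vnorm_ge0 _) k2n).
  by rewrite !exprMn.
apply: le_trans c1.
rewrite /kap -mulrA.
apply: le_trans (_ : (Cuc + 2)^-1 / (cuc^-1 + 2) * (fs * (cuc^-1 + 2) * vnorm (a - b) * vnorm (a - b)) <= _).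
  apply: ler_wpM2l; first by rewrite divr_ge0 ?ltW.
  by apply: ler_wpM2r; rewrite ?vnorm_ge0.
rewrite expr2 le_eqVlt; apply/orP; left; apply/eqP.
field; lra.
Qed.

Lemma mono (R : realType) (phi' : R -> R) (cuc Cuc : R) d (a b : 'rV[R]_d) :
  (forall s t, 0 <= s -> s <= t -> phi' s <= phi' t) -> phi' 0 = 0 ->
  unif_convex cuc Cuc phi' -> 0 < cuc -> 0 < Cuc ->
  kap cuc Cuc * vnorm (Aop phi' a - Aop phi' b) * vnorm (a - b)
    <= dot (Aop phi' a - Aop phi' b) (a - b).
Proof.
move=> h1 h2 h3 h4 h5.
have [ba|ab] := leP (vnorm b) (vnorm a); first exact: mono_le.
have := mono_le (a:=b) (b:=a) h1 h2 h3 h4 h5 (ltW ab).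
have vN : forall x : 'rV[R]_d, vnorm (- x) = vnorm x.
  by move=> x; rewrite /vnorm /dot; congr Num.sqrt; apply: eq_bigr => i _; rewrite mxE mulrNN.
have dN : forall x y : 'rV[R]_d, dot (- x) (- y) = dot x y.
  by move=> x y; rewrite /dot; apply: eq_bigr => i _; rewrite !mxE mulrNN.
by rewrite -(opprB (Aop phi' a)) -(opprB a) vN vN dN.
Qed.

Lemma sqr_abs (R : realType) (x : R) : `|x| ^+ 2 = x ^+ 2.
Proof. by rewrite real_normK // num_real. Qed.

Lemma geo_abs (R : realType) (DE Dn en X TD TE ND NE k : R) :
  0 <= TD -> 0 <= TE -> 0 <= ND -> 0 <= NE ->
  ND ^+ 2 = Dn ^+ 2 + TD ^+ 2 -> NE ^+ 2 = en ^+ 2 + TE ^+ 2 ->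
  DE = Dn * en + X -> `|X| <= TD * TE -> 0 < k -> k * ND * NE <= DE ->
  (1 * TE <= NE /\ NE <= (2 / k) * TE) \/
  (1 * `|Dn| <= ND /\ ND <= (2 / k) * `|Dn|).
Proof.
move=> TD0 TE0 ND0 NE0 hN hE hDE hX k0 hk.
have sq : forall x y : R, 0 <= x -> 0 <= y -> x ^+ 2 <= y ^+ 2 -> x <= y.
  by move=> x y x0 y0; rewrite ler_sqr.
have TENE : TE <= NE by apply: sq => //; rewrite hE; have := sqr_ge0 en; lra.
have enNE : `|en| <= NE by apply: sq => //; rewrite sqr_abs hE; have := sqr_ge0 TE; lra.
have DnND : `|Dn| <= ND by apply: sq => //; rewrite sqr_abs hN; have := sqr_ge0 TD; lra.
have TDND : TD <= ND by apply: sq => //; rewrite hN; have := sqr_ge0 Dn; lra.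
have [c|c] := leP (k * NE) (2 * TE).
  left; rewrite mul1r; split => //.
  by rewrite mulrAC ler_pdivlMr // mulrC.
right; rewrite mul1r; split => //.
have NEp : 0 < NE by nra.
have h1 : DE <= `|Dn| * NE + ND * TE.
  have : Dn * en <= `|Dn| * `|en| by rewrite -normrM ler_norm.
  have : `|Dn| * `|en| <= `|Dn| * NE by rewrite ler_wpM2l.
  have : TD * TE <= ND * TE by rewrite ler_wpM2r.
  have := ler_norm X.
  lra.
have h2 : ND * (2 * TE) <= ND * (k * NE) by rewrite ler_wpM2l // ltW.
have h3 : k * ND * NE <= 2 * `|Dn| * NE by nra.
have h4 : k * ND <= 2 * `|Dn|.
  by move: h3; rewrite ler_pM2r.
by rewrite mulrAC ler_pdivlMr // mulrC.
Qed.
Lemma dot2 (R : realType) (u v : 'rV[R]_2) : dot u v = u 0 ord0 * v 0 ord0 + u 0 (lift ord0 ord0) * v 0 (lift ord0 ord0).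
Proof. by rewrite /dot !big_ord_recl big_ord0 addr0. Qed.
Lemma coord20 (R : realType) (u : 'rV[R]_2) : Defs.coord u 0 = u 0 ord0.
Proof. by rewrite /Defs.coord big_mkcond !big_ord_recl big_ord0 /= !addr0. Qed.
Lemma coord21 (R : realType) (u : 'rV[R]_2) : Defs.coord u 1 = u 0 (lift ord0 ord0).
Proof. by rewrite /Defs.coord big_mkcond !big_ord_recl big_ord0 /= add0r addr0. Qed.

Lemma geo2 (R : realType) (D a b nu : 'rV[R]_2) : dot nu nu = 1 ->
  [/\ vnorm D ^+ 2 = dot D nu ^+ 2 + `|gtau2 D nu| ^+ 2,
      vnorm (a - b) ^+ 2 = dot (a - b) nu ^+ 2 + tjump_norm a b nu ^+ 2,
      dot D (a - b) = dot D nu * dot (a - b) nu + gtau2 D nu * (gtau2 a nu - gtau2 b nu),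
      `|gtau2 D nu * (gtau2 a nu - gtau2 b nu)| <= `|gtau2 D nu| * tjump_norm a b nu &
      0 <= tjump_norm a b nu].
Proof.
rewrite /tjump_norm /= /gtau2 !coord20 !coord21 !dot2 => hn.
rewrite !vnorm_sq !dot2 !mxE !sqr_abs normrM.
split => //.
- by rewrite -[LHS]mulr1 -hn; ring.
- by rewrite -[LHS]mulr1 -hn; ring.
- by rewrite -[LHS]mulr1 -hn; ring.
Qed.

Definition i31 := (lift ord0 (ord0 : 'I_2)).
Definition i32 := (lift ord0 (lift ord0 (ord0 : 'I_1))).

Lemma dot3 (R : realType) (u v : 'rV[R]_3) : dot u v = u 0 ord0 * v 0 ord0 + u 0 i31 * v 0 i31 + u 0 i32 * v 0 i32.
Proof. by rewrite /dot !big_ord_recl big_ord0 addr0 addrA. Qed.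
Lemma coord30 (R : realType) (u : 'rV[R]_3) : Defs.coord u 0 = u 0 ord0.
Proof. by rewrite /Defs.coord big_mkcond !big_ord_recl big_ord0 /= !addr0. Qed.
Lemma coord31 (R : realType) (u : 'rV[R]_3) : Defs.coord u 1 = u 0 i31.
Proof. by rewrite /Defs.coord big_mkcond !big_ord_recl big_ord0 /= add0r !addr0. Qed.
Lemma coord32 (R : realType) (u : 'rV[R]_3) : Defs.coord u 2 = u 0 i32.
Proof. by rewrite /Defs.coord big_mkcond !big_ord_recl big_ord0 /= !add0r !addr0. Qed.

Lemma geo3 (R : realType) (D a b nu : 'rV[R]_3) : dot nu nu = 1 ->
  [/\ vnorm D ^+ 2 = dot D nu ^+ 2 + vnorm (gtau3 D nu) ^+ 2,
      vnorm (a - b) ^+ 2 = dot (a - b) nu ^+ 2 + tjump_norm a b nu ^+ 2,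
      dot D (a - b) = dot D nu * dot (a - b) nu + dot (gtau3 D nu) (gtau3 a nu - gtau3 b nu),
      `|dot (gtau3 D nu) (gtau3 a nu - gtau3 b nu)| <= vnorm (gtau3 D nu) * tjump_norm a b nu &
      0 <= tjump_norm a b nu].
Proof.
rewrite /tjump_norm /= => hn.
split; [| | |exact: CS|exact: vnorm_ge0];
  rewrite ?vnorm_sq !dot3 /gtau3 ?mxE /= ?coord30 ?coord31 ?coord32 ?mxE /=;
  move: hn; rewrite dot3 => hn;
  by rewrite -[LHS]mulr1 -hn; ring.
Qed.

Lemma kap_pos (R : realType) (cuc Cuc : R) : 0 < cuc -> 0 < Cuc -> 0 < kap cuc Cuc.
Proof.
move=> h1 h2; rewrite /kap divr_gt0 // ?invr_gt0; first lra.
by have := invr_gt0 cuc; rewrite h1 => ?; lra.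
Qed.

Lemma kap_le1 (R : realType) (cuc Cuc : R) : 0 < cuc -> 0 < Cuc -> kap cuc Cuc <= 1.
Proof.
move=> h1 h2; rewrite /kap.
have k2 : 1 <= cuc^-1 + 2 by have := invr_gt0 cuc; rewrite h1 => ?; lra.
have k1 : (Cuc + 2)^-1 <= 1 by rewrite invf_le1; lra.
rewrite ler_pdivrMr; last lra.
by rewrite mul1r; lra.
Qed.

Unset Implicit Arguments.

Theorem lemma3p1 (R : realType) (d : nat) (hd : d = 2%N \/ d = 3%N)
  (cuc Cuc : R) (hcuc : 0 < cuc) (hCuc : cuc <= Cuc) (sigma : R) :
  exists c C : R, [/\ 0 < c, c <= C &
    forall phi phi' : R -> R,
      NFunction phi phi' -> unif_convex cuc Cuc phi' ->
    forall (F : 'I_d -> 'rV[R]_d) (pp pm nu : 'rV[R]_d),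
      shape_reg sigma F pp -> shape_reg sigma F pm ->
      face_normal F pp pm nu ->
    (* v_h|T_+ (x) = a.x + al,  v_h|T_- (x) = b.x + be, continuous at the
       barycenter of gamma *)
    forall (a b : 'rV[R]_d) (al be : R),
      dot a (bary F) + al = dot b (bary F) + be ->
      eqsim c C (vnorm (a - b)) (tjump_norm a b nu) \/
      eqsim c C (vnorm (Aop phi' a - Aop phi' b))
                `|dot (Aop phi' a) nu - dot (Aop phi' b) nu| ].
Proof.
have Cu0 : 0 < Cuc by apply: lt_le_trans hCuc.
have kp := kap_pos hcuc Cu0.
have k1 := kap_le1 hcuc Cu0.
exists 1, (2 / kap cuc Cuc); split => //.
  by rewrite ler_pdivlMr // mul1r; lra.
move=> phi phi' [_ _ _ [mon p0 _ _]] huc F pp pm nu _ _ [hn1 _ _ _] a b al be _.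
have hk := mono a b mon p0 huc hcuc Cu0.
have hn : dot nu nu = 1 by rewrite -vnorm_sq hn1 expr1n.
rewrite /eqsim -dotBl.
case: hd => hd; subst d.
  have [g1 g2 g3 g4 g5] := geo2 (Aop phi' a - Aop phi' b) a b hn.
  exact: (geo_abs (normr_ge0 _) g5 (vnorm_ge0 _) (vnorm_ge0 _) g1 g2 g3 g4 kp hk).
have [g1 g2 g3 g4 g5] := geo3 (Aop phi' a - Aop phi' b) a b hn.
exact: (geo_abs (vnorm_ge0 _) g5 (vnorm_ge0 _) (vnorm_ge0 _) g1 g2 g3 g4 kp hk).
Qed.
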